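(* Let $X$ be a compact metrizable space and let $\{U_i\}_{i\in I}$ be a covering of $X$ by open sets. Suppose that for each $i\in I$, $\ell_i$ is a positive log-scale on $\overline{U_i}$ such that for every pair $i,j\in I$ the log-scales $\ell_i$ and $\ell_j$ are Lipschitz equivalent on $\overline{U_i}\cap\overline{U_j}$. Then there is a log-scale $\ell$ on $X$ such that $\ell$ is Lipschitz equivalent to $\ell_i$ on $\overline{U_i}$ for every $i\in I$.
   Context: A log-scale on a set $Y$ is a function $\ell:Y\times Y\to\mathbb{R}\cup\{\infty\}$ such that $\ell(x,y)=\ell(y,x)$, $\ell(x,y)=+\infty$ iff $x=y$, and for some $\delta\ge0$, $\ell(x,z)\ge\min(\ell(x,y),\ell(y,z))-\delta$ for all $x,y,z$. A log-scale on a topological space is assumed to define its topology (via a metric $|\cdot|$ with $c^{-1}\alpha^{\ell(x,y)}\le|x-y|\le c\alpha^{\ell(x,y)}$ for constants $0<\alpha<1$, $c>1$). A log-scale is positive if all its values are positive. Two log-scales $\ell,\ell'$ on a set are Lipschitz equivalent if $|\ell(x,y)-\ell'(x,y)|$ is bounded by a constant for all $x,y$. *)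

(* Defs.v *)
From HB Require Import structures.
From mathcomp Require Import all_boot all_order all_algebra.
From mathcomp Require Import all_classical all_reals all_analysis.
Set Implicit Arguments. Unset Strict Implicit. Unset Printing Implicit Defensive.
Import Order.TTheory GRing.Theory Num.Theory.
Local Open Scope classical_set_scope.
Local Open Scope ring_scope.

Section LogScales.
Context {R : realType} {X : topologicalType}.

Definition is_metric_on (A : set X) (d : X -> X -> R) : Prop :=
  forall x y z, A x -> A y -> A z ->
    [/\ 0 <= d x y, (d x y = 0 <-> x = y), d x y = d y x
      & d x z <= d x y + d y z].

(* the metric d on A induces the subspace topology of A (same
   neighbourhoods of every point of A) *)
Definition metric_induces_topology (A : set X) (d : X -> X -> R) : Prop :=
  forall x, A x -> forall V : set X,
    (exists2 e : R, 0 < e & forall y, A y -> d x y < e -> V y) <->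
    (exists W : set X, [/\ open W, W x & forall y, A y -> W y -> V y]).

Definition metrizable_space : Prop :=
  exists d : X -> X -> R, is_metric_on setT d /\ metric_induces_topology setT d.

(* alpha ^ l for l in R u {+oo}, with alpha ^ (+oo) = 0 *)
Definition alpha_pow (alpha : R) (l : \bar R) : R :=
  match l with EFin r => powR alpha r | _ => 0 end.

(* log-scale on the subspace A of X (values outside A x A are irrelevant);
   it is required to define the (subspace) topology of A *)
Definition log_scale_on (A : set X) (l : X -> X -> \bar R) : Prop :=
  [/\ (forall x y, A x -> A y -> l x y = l y x),
      (forall x y, A x -> A y -> l x y <> -oo%E),
      (forall x y, A x -> A y -> (l x y = +oo%E <-> x = y)),
      (exists2 delta : R, 0 <= delta &
         forall x y z, A x -> A y -> A z ->
           (Order.min (l x y) (l y z) - delta%:E <= l x z)%E)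
    & (exists d : X -> X -> R, exists alpha c : R,
         [/\ is_metric_on A d, metric_induces_topology A d,
             0 < alpha < 1, 1 < c
           & forall x y, A x -> A y ->
               c^-1 * alpha_pow alpha (l x y) <= d x y /\
               d x y <= c * alpha_pow alpha (l x y)])].

Definition positive_log_scale_on (A : set X) (l : X -> X -> \bar R) : Prop :=
  log_scale_on A l /\ (forall x y, A x -> A y -> (0 < l x y)%E).

Definition lipschitz_equiv_on (A : set X) (l l' : X -> X -> \bar R) : Prop :=
  exists C : R, forall x y, A x -> A y ->
    (l x y <= l' x y + C%:E)%E /\ (l' x y <= l x y + C%:E)%E.

End LogScales.

(* Main.v *)
Require Import Defs.
From HB Require Import structures.
From mathcomp Require Import all_boot all_order all_algebra.
From mathcomp Require Import all_classical all_reals all_analysis.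
From mathcomp Require Import finmap ring lra zify.
Local Open Scope classical_set_scope.

Section PointedCopy.
Variable X : topologicalType.
Variable x0 : X.
Definition Xp : Type := X.
HB.instance Definition _ := Topological.on Xp.
HB.instance Definition _ := isPointed.Build Xp x0.
Lemma compact_cover' (A : set X) : compact A -> @cover_compact Xp A.
Proof. move=> h. rewrite -compact_cover. exact: h. Qed.
End PointedCopy.

Section Gen.
Import Order.TTheory GRing.Theory Num.Theory.
Local Open Scope ring_scope.
Context {R : realType}.

Lemma seq_bound (T : eqType) (P : T -> R -> Prop) (s : seq T) :
  (forall t, t \in s -> exists C, P t C) ->
  (forall t C C', P t C -> C <= C' -> P t C') ->
  exists C, 0 <= C /\ forall t, t \in s -> P t C.
Proof.
move=> H Hm; elim: s H => [|a s IH] H.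
  by exists 0; split => // t; rewrite in_nil.
have [C [C0 HC]] : exists C, 0 <= C /\ forall t, t \in s -> P t C.
  by apply: IH => t ts; apply: H; rewrite in_cons ts orbT.
have [Ca HCa] := H a (mem_head _ _).
exists (Num.max C Ca); split; first by rewrite le_max C0.
move=> t; rewrite in_cons => /orP[/eqP->|ts].
  by apply: Hm HCa _; rewrite le_max lexx orbT.
by apply: Hm (HC _ ts) _; rewrite le_max lexx.
Qed.

Lemma seq_min (T : eqType) (r : T -> R) (s : seq T) :
  (forall t, t \in s -> 0 < r t) ->
  exists e, 0 < e /\ forall t, t \in s -> e <= r t.
Proof.
elim: s => [|a s IH] H.
  by exists 1; split => // t; rewrite in_nil.
have [e [e0 He]] : exists e, 0 < e /\ forall t, t \in s -> e <= r t.
  by apply: IH => t ts; apply: H; rewrite in_cons ts orbT.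
have ra := H a (mem_head _ _).
exists (Num.min e (r a)); split; first by rewrite lt_min e0 ra.
move=> t; rewrite in_cons => /orP[/eqP->|ts]; first by rewrite ge_min lexx orbT.
by rewrite ge_min He.
Qed.

Context {X : topologicalType}.

Lemma ball_open (d : X -> X -> R) (p : X) (r : R) :
  is_metric_on setT d -> metric_induces_topology setT d ->
  open [set y | d p y < r].
Proof.
move=> Hm Ht; rewrite openE => z /= bz.
have [W [oW Wz WV]] : exists W : set X, [/\ open W, W z &
    forall y, setT y -> W y -> [set y | d p y < r] y].
  apply/(Ht z I); exists (r - d p z); first by rewrite subr_gt0.
  move=> y _ /= hy.
  have [_ _ _ tr] := Hm p z y Logic.I Logic.I Logic.I.
  by apply: le_lt_trans tr _; lra.
rewrite /interior nbhsE; exists W; first by split.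
by move=> y Wy; apply: WV.
Qed.


Lemma lebesgue (K : set X) (rho : X -> X -> R) (J : Type) (G : J -> set X)
  (g : X -> J) :
  compact K -> is_metric_on K rho -> metric_induces_topology K rho ->
  (forall j, open (G j)) -> (forall x, K x -> G (g x) x) ->
  exists s : seq X, exists e : R, 0 < e /\ forall x, K x ->
    exists p, [/\ p \in s, K p & forall y, K y -> rho x y < e -> G (g p) y].
Proof.
move=> Hc Hm Ht Ho Hg.
have Hr : forall x, exists r : R, K x ->
    0 < r /\ forall y, K y -> rho x y < r -> G (g x) y.
  move=> x; case: (pselect (K x)) => Kx; last by exists 1.
  have [e e0 He] : exists2 e : R, 0 < e & forall y, K y -> rho x y < e -> G (g x) y.
    apply/(Ht x Kx); exists (G (g x)); split => //; exact: Hg.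
  by exists e.
have [r Hr'] := choice Hr.
have HO : forall x, exists O : set X, K x ->
    [/\ open O, O x & forall y, K y -> O y -> rho x y < r x / 2].
  move=> x; case: (pselect (K x)) => Kx; last by exists set0.
  have [r0 _] := Hr' x Kx.
  have [W [oW Wx WV]] : exists W : set X, [/\ open W, W x &
      forall y, K y -> W y -> [set y | rho x y < r x / 2] y].
    apply/(Ht x Kx); exists (r x / 2); first by rewrite divr_gt0.
    by move=> y.
  by exists W.
have [Ob HO'] := choice HO.
case: (pselect (exists x, K x)) => [[x0 Kx0]|nK]; last first.
  by exists [::], 1; split => // x Kx; exfalso; apply: nK; exists x.
have [D' sub cov] : finite_subset_cover K Ob K.
  apply: (@compact_cover' X x0 K Hc X K Ob).
    by move=> x Kx; have [] := HO' x Kx.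
  by move=> x Kx; exists x => //; have [] := HO' x Kx.
have [e [e0 He]] : exists e, 0 < e /\ forall t : X, t \in (val D') -> e <= r t / 2.
  by apply: seq_min => p pD; apply: divr_gt0 => //; case: (Hr' p (set_mem (sub p pD))).
exists ((val D')), e; split => // x Kx.
have [p pD Opx] := cov x Kx.
have Kp := set_mem (sub p pD).
exists p; split => // y Ky hxy.
have [_ Hp] := Hr' p Kp.
apply: Hp => //.
have [_ _ _ tr] := Hm p x y Kp Kx Ky.
have [_ _ h3] := HO' p Kp.
have := h3 x Kx Opx.
have := He p pD.
lra.
Qed.

End Gen.
Section Alpha.
Import Order.TTheory GRing.Theory Num.Theory.
Local Open Scope ring_scope.
Context {R : realType}.

Lemma ap_fin (a r : R) : 0 < a -> alpha_pow a r%:E = expR (r * ln a).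
Proof. by move=> a0; rewrite /alpha_pow /powR gt_eqF. Qed.

Lemma ap_ge0 (a : R) v : 0 < a -> 0 <= alpha_pow a v.
Proof. by move=> a0; case: v => [r||] //; rewrite ap_fin // expR_ge0. Qed.

Lemma ap_upper (a t : R) v : 0 < a < 1 -> 0 < t -> t <= alpha_pow a v ->
  (v <= (ln t / ln a)%:E)%E.
Proof.
move=> /andP[a0 a1] t0; case: v => [r||]; last 2 first.
- by move=> h; exfalso; move: h; rewrite leNgt t0.
- by rewrite leNye.
rewrite ap_fin // lee_fin => h.
have la : ln a < 0 by apply: ln_lt0; rewrite a0 a1.
rewrite ler_ndivlMr //.
have := h; rewrite -(ler_ln (x:=t)) ?posrE ?expR_gt0 // expRK.
by move=> hh; exact: hh.
Qed.

Lemma ap_lower (a t : R) v : 0 < a < 1 -> 0 < t -> v <> -oo%E ->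
  alpha_pow a v < t -> ((ln t / ln a)%:E < v)%E.
Proof.
move=> /andP[a0 a1] t0; case: v => [r||] // _; last by rewrite ltey.
rewrite ap_fin // lte_fin => h.
have la : ln a < 0 by apply: ln_lt0; rewrite a0 a1.
rewrite ltr_ndivrMr //.
by have := h; rewrite -(ltr_ln (x:=expR _)) ?posrE ?expR_gt0 // expRK.
Qed.

Lemma ap_small (a M : R) v : 0 < a < 1 -> (M%:E < v)%E ->
  alpha_pow a v < expR (M * ln a).
Proof.
move=> /andP[a0 a1]; case: v => [r||] // h; last by rewrite expR_gt0.
rewrite ap_fin // ltr_expR.
have la : ln a < 0 by apply: ln_lt0; rewrite a0 a1.
move: h; rewrite lte_fin => h; nra.
Qed.

Lemma ap_shift (k delta : R) (u w : \bar R) : 0 < k -> u <> -oo%E ->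
  (u - delta%:E <= w)%E -> alpha_pow (expR (- k)) w <= expR (delta * k) * alpha_pow (expR (-k)) u.
Proof.
move=> k0; have a0 : 0 < expR (- k) by apply: expR_gt0.
case: w => [r||]; last 2 first.
- by move=> _ _; rewrite mulr_ge0 ?expR_ge0 ?ap_ge0.
- by case: u => [q||] //=; rewrite leeNy_eq.
case: u => [q||] // _.
rewrite lee_fin => h; rewrite !ap_fin // expRK -expRD ler_expR; nra.
Qed.

Lemma e_mono (a b : \bar R) (C C' : R) : (a <= b + C%:E)%E -> C <= C' -> (a <= b + C'%:E)%E.
Proof. by case: a => [a||]; case: b => [b||] //=; rewrite ?lee_fin ?leey ?leNye //; lra. Qed.

Lemma e_min (a b a' b' : \bar R) (C : R) : (a <= a' + C%:E)%E -> (b <= b' + C%:E)%E ->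
  (Order.min a b <= Order.min a' b' + C%:E)%E.
Proof.
move=> ha hb; rewrite /Order.min.
case: ifP => h1; case: ifP => h2.
- exact: ha.
- exact: le_trans (ltW h1) hb.
- by apply: le_trans ha; rewrite leNgt h1.
- exact: hb.
Qed.

Lemma e_fin3 (m M l2 L2 : \bar R) (C dm d : R) : (m <= M + C%:E)%E ->
  (M - dm%:E <= l2)%E -> (l2 <= L2 + C%:E)%E -> 2 * C + dm <= d -> (m - d%:E <= L2)%E.
Proof.
case: m => [m||]; case: M => [M||]; case: l2 => [l2||]; case: L2 => [L2||] //=;
  rewrite ?lee_fin ?leey ?leNye //; lra.
Qed.

Lemma e_small (m w : \bar R) (B d : R) : (m <= B%:E)%E -> B <= d -> (0 <= w)%E -> (m - d%:E <= w)%E.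
Proof.
by case: m => [m||]; case: w => [w||] //=; rewrite ?lee_fin ?leey ?leNye //; lra.
Qed.

Lemma e_sub_mono (a b : \bar R) (d d' : R) : (a - d%:E <= b)%E -> d <= d' -> (a - d'%:E <= b)%E.
Proof. by case: a => [a||]; case: b => [b||] //=; rewrite ?lee_fin ?leey ?leNye //; lra. Qed.

Lemma e_gt (M C : R) (lj LL : \bar R) : ((M + C)%:E < lj)%E -> (lj <= LL + C%:E)%E -> (M%:E < LL)%E.
Proof. by case: lj => [lj||]; case: LL => [LL||] //=; rewrite ?lte_fin ?lee_fin ?ltey ?leey ?leNye //; lra. Qed.

End Alpha.
Arguments e_mono {R a b C C'}.
Arguments e_min {R a b a' b' C}.
Arguments e_fin3 {R m M l2 L2 C dm d}.
Arguments e_small {R m w B d}.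
Arguments e_sub_mono {R a b d d'}.
Arguments e_gt {R M C lj LL}.
Section Chain.
Import Order.TTheory GRing.Theory Num.Theory.
Local Open Scope ring_scope.
Context {R : realType} {T : Type}.
Variable rho : T -> T -> R.
Variable K : R.
Hypothesis rho_ge0 : forall x y, 0 <= rho x y.
Hypothesis rho_xx : forall x, rho x x = 0.
Hypothesis rho_sym : forall x y, rho x y = rho y x.
Hypothesis rho_q : forall x y z, rho x z <= K * Num.max (rho x y) (rho y z).
Hypothesis K1 : 1 <= K.
Hypothesis K2 : K * K <= 2.

Definition cst (f : nat -> T) (a b : nat) := \sum_(a <= i < b) rho (f i) (f i.+1).

Lemma cst_ge0 f a b : 0 <= cst f a b.
Proof. by apply: sumr_ge0 => i _. Qed.

Lemma cst_split f a b c : (a <= b)%N -> (b <= c)%N -> cst f a c = cst f a b + cst f b c.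
Proof. by move=> ab bc; rewrite /cst (big_cat_nat ab bc). Qed.

Lemma cst_nil f a : cst f a a = 0.
Proof. by rewrite /cst big_geq. Qed.

Lemma cst1 f a : cst f a a.+1 = rho (f a) (f a.+1).
Proof. by rewrite /cst big_nat1. Qed.

Lemma frink f : forall n a b, (b - a <= n)%N -> (a <= b)%N ->
  rho (f a) (f b) <= 2 * cst f a b.
Proof.
elim=> [|n IH] a b hn ab.
  have -> : b = a by apply/eqP; rewrite eqn_leq ab andbT -subn_eq0 -leqn0.
  by rewrite rho_xx cst_nil mulr0.
have [hn'|hn'] := leqP (b - a) n; first exact: IH.
have ltab : (a < b)%N by rewrite -subn_gt0 (leq_ltn_trans (leq0n n) hn').
have K0 : 0 <= K by apply: le_trans K1; rewrite ler01.
set S := cst f a b.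
have S0 : 0 <= S by apply: cst_ge0.
pose P := fun m => ((a <= m) && (m <= b.-1))%N && (cst f a m <= S / 2).
have exP : exists m, P m.
  exists a; rewrite /P leqnn /= cst_nil.
  have -> : (a <= b.-1)%N by rewrite -ltnS prednK ?ltab // (leq_ltn_trans (leq0n a) ltab).
  by rewrite divr_ge0.
have ubP : forall m, P m -> (m <= b.-1)%N by move=> m /andP[/andP[]].
case: (ex_maxnP exP ubP) => m /andP[/andP[am mb] hm] mmax.
have b0 : (0 < b)%N by apply: leq_ltn_trans (leq0n a) ltab.
have mltb : (m < b)%N by rewrite (leq_ltn_trans mb) // ltn_predL.
have Ssplit : S = cst f a m + rho (f m) (f m.+1) + cst f m.+1 b.
  by rewrite /S (cst_split f a m b am (ltnW mltb)) (cst_split f m m.+1 b (leqnSn m) mltb) cst1 addrA.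
have h1 : rho (f a) (f m) <= S.
  have : (m - a <= n)%N by lia.
  move=> /(IH a m)/(_ am) h; lra.
have h2 : rho (f m) (f m.+1) <= S.
  have := cst_ge0 f a m; have := cst_ge0 f m.+1 b; lra.
have h3 : cst f m.+1 b <= S / 2.
  have [e|ne] := eqVneq m.+1 b; first by rewrite e cst_nil divr_ge0.
  have m1b : (m.+1 <= b.-1)%N by lia.
  have : ~~ P m.+1.
    apply/negP => /mmax; lia.
  rewrite /P m1b (leq_trans am (leqnSn m)) /= -ltNge => hlt.
  have := cst_split f a m.+1 b (leq_trans am (leqnSn m)) mltb.
  rewrite -/S; lra.
have h4 : rho (f m.+1) (f b) <= S.
  have : (b - m.+1 <= n)%N by lia.
  move=> /(IH m.+1 b)/(_ mltb) h; lra.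
have h5 : rho (f m) (f b) <= K * S.
  apply: le_trans (rho_q _ (f m.+1) _) _.
  apply: (ler_wpM2l K0).
  by rewrite ge_max h2 h4.
have h6 : rho (f a) (f b) <= K * (K * S).
  apply: le_trans (rho_q _ (f m) _) _.
  apply: (ler_wpM2l K0).
  rewrite ge_max h5 andbT; apply: le_trans h1 _; have := K1; nra.
apply: le_trans h6 _; rewrite mulrA; have := ler_wpM2r S0 K2; move=> hh; exact: hh.
Qed.


Definition chains x y := [set r : R | exists n f,
  [/\ f 0%N = x, f n = y & r = cst f 0 n]].
Definition Dm x y := inf (chains x y).

Definition ch2 (x y : T) : nat -> T := fun i => if i == 0%N then x else y.

Lemma cst_ch2 x y : cst (ch2 x y) 0 1 = rho x y.
Proof. by rewrite cst1. Qed.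

Lemma chains_ne x y : chains x y !=set0.
Proof. by exists (rho x y), 1%N, (ch2 x y); split => //; rewrite cst_ch2. Qed.

Lemma chains_lb x y : has_lbound (chains x y).
Proof. by exists 0 => r [n [f [_ _ ->]]]; apply: cst_ge0. Qed.

Lemma Dm_le x y n f : f 0%N = x -> f n = y -> Dm x y <= cst f 0 n.
Proof.
move=> f0 fn; apply: (ge_inf (chains_lb x y)).
by exists n, f.
Qed.

Lemma Dm_ge x y b : (forall n f, f 0%N = x -> f n = y -> b <= cst f 0 n) ->
  b <= Dm x y.
Proof.
move=> H; apply: lb_le_inf; first exact: chains_ne.
by move=> r [n [f [f0 fn ->]]]; apply: H.
Qed.

Lemma Dm_le_rho x y : Dm x y <= rho x y.
Proof. by rewrite -cst_ch2; apply: Dm_le. Qed.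

Lemma rho_le_Dm x y : rho x y <= 2 * Dm x y.
Proof.
have : rho x y / 2 <= Dm x y.
  apply: Dm_ge => n f f0 fn.
  have := frink f (n - 0) 0 n (leqnn _) (leq0n n); rewrite f0 fn; lra.
lra.
Qed.

Lemma Dm_ge0 x y : 0 <= Dm x y.
Proof. by apply: Dm_ge => n f _ _; apply: cst_ge0. Qed.

Lemma Dm_sym_le x y : Dm x y <= Dm y x.
Proof.
apply: Dm_ge => n f f0 fn.
pose g := fun i => f (n - i)%N.
apply: le_trans (Dm_le x y n g _ _) _.
- by rewrite /g subn0.
- by rewrite /g subnn.
rewrite /cst big_nat_rev /= le_eqVlt; apply/orP; left; apply/eqP.
apply: eq_big_nat => i /andP[_ hi].
rewrite /g add0n rho_sym; congr (rho (f _) (f _)); lia.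
Qed.

Lemma Dm_sym x y : Dm x y = Dm y x.
Proof. by apply/eqP; rewrite eq_le !Dm_sym_le. Qed.

Lemma cst_cat f g n m : f n = g 0%N ->
  cst (fun i => if (i <= n)%N then f i else g (i - n)%N) 0 (n + m) =
  cst f 0 n + cst g 0 m.
Proof.
move=> fg.
rewrite (cst_split _ 0 n (n + m)) ?leq_addr //; congr (_ + _).
  apply: eq_big_nat => i /andP[_ hi].
  by rewrite ifT ?(ltnW hi) // ifT.
rewrite /cst -{1}(add0n n) big_addn addKn.
apply: eq_big_nat => i /andP[_ hi].
have -> : ((i + n)%N <= n)%N = (i == 0%N) by lia.
have -> : ((i + n).+1 <= n)%N = false by lia.
have -> : (i + n - n = i)%N by lia.
have -> : ((i + n).+1 - n = i.+1)%N by lia.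
by case: eqP => [->|//]; rewrite add0n fg.
Qed.

Lemma Dm_tri x y z : Dm x z <= Dm x y + Dm y z.
Proof.
suff H : forall n f, f 0%N = x -> f n = y -> Dm x z - cst f 0 n <= Dm y z.
  have : Dm x z - Dm y z <= Dm x y.
    apply: Dm_ge => n f f0 fn; have := H n f f0 fn; lra.
  lra.
move=> n f f0 fn.
apply: Dm_ge => m g g0 gm.
case: (eqVneq m 0%N) => [m0|mn0].
  subst m; have yz : y = z by rewrite -g0 -gm.
  subst z; rewrite cst_nil g0; have := Dm_le x y n f f0 fn; lra.
have := Dm_le x z (n + m) (fun i => if (i <= n)%N then f i else g (i - n)%N).
rewrite cst_cat; last by rewrite fn g0.
have -> : (n + m <= n)%N = false by lia.
have -> : (n + m - n = m)%N by lia.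
by move=> /(_ f0 gm); lra.
Qed.

Lemma Dm_props : [/\ forall x y, 0 <= Dm x y, forall x y, Dm x y <= rho x y,
  forall x y, rho x y <= 2 * Dm x y, forall x y, Dm x y = Dm y x &
  forall x y z, Dm x z <= Dm x y + Dm y z].
Proof.
split; [exact: Dm_ge0|exact: Dm_le_rho|exact: rho_le_Dm|exact: Dm_sym|exact: Dm_tri].
Qed.

End Chain.


Section Main.
Import Order.TTheory GRing.Theory Num.Theory.
Local Open Scope ring_scope.
Context {R : realType} {X : topologicalType} {I : Type}.
Variables (U : I -> set X) (l : I -> X -> X -> \bar R) (d0 : X -> X -> R) (g : X -> I).
Hypothesis Hc : compact [set: X].
Hypothesis Hd0 : is_metric_on setT d0.
Hypothesis Ht0 : metric_induces_topology setT d0.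
Hypothesis HU : forall i, open (U i).
Hypothesis Hg : forall x, U (g x) x.
Hypothesis Hl : forall i, positive_log_scale_on (closure (U i)) (l i).
Hypothesis Hlip : forall i j,
  lipschitz_equiv_on (closure (U i) `&` closure (U j)) (l i) (l j).

Local Notation cl i := (closure (U i)).

Lemma d0_xx x : d0 x x = 0.
Proof. by have [_ [_ h] _ _] := Hd0 x x x Logic.I Logic.I Logic.I; apply: h. Qed.
Lemma d0_sym x y : d0 x y = d0 y x.
Proof. by have [_ _ h _] := Hd0 x y x Logic.I Logic.I Logic.I. Qed.
Lemma d0_tri x y z : d0 x z <= d0 x y + d0 y z.
Proof. by have [_ _ _ h] := Hd0 x y z Logic.I Logic.I Logic.I. Qed.
Lemma d0_ge0 x y : 0 <= d0 x y.
Proof. by have [h _ _ _] := Hd0 x y x Logic.I Logic.I Logic.I. Qed.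

Lemma l_sym i x y : cl i x -> cl i y -> l i x y = l i y x.
Proof. by have [[h _ _ _ _] _] := Hl i; apply: h. Qed.
Lemma l_pos i x y : cl i x -> cl i y -> (0 < l i x y)%E.
Proof. by have [_ h] := Hl i; apply: h. Qed.
Lemma l_ninf i x y : cl i x -> cl i y -> l i x y <> -oo%E.
Proof. by move=> hx hy; have := l_pos i x y hx hy; case: (l i x y). Qed.
Lemma l_inf i x y : cl i x -> cl i y -> (l i x y = +oo%E <-> x = y).
Proof. by have [[_ _ h _ _] _] := Hl i; apply: h. Qed.
Lemma l_quasi i : exists delta : R, 0 <= delta /\
  forall x y z, cl i x -> cl i y -> cl i z ->
    (Order.min (l i x y) (l i y z) - delta%:E <= l i x z)%E.
Proof. by have [[_ _ _ [delta de h] _] _] := Hl i; exists delta. Qed.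

Lemma compact_cl i : compact (cl i).
Proof. apply: (subclosed_compact _ Hc) => //; exact: closed_closure. Qed.

Lemma F2 i eta : 0 < eta -> exists B : R, forall x y, cl i x -> cl i y ->
  eta <= d0 x y -> (l i x y <= B%:E)%E.
Proof.
move=> eta0.
have [[_ _ _ _ [d [a [c [dm dt ac c1 hb]]]]] _] := Hl i.
have hG : forall x, cl i x -> [set y | d0 x y < eta / 2] x.
  by move=> x _ /=; rewrite d0_xx divr_gt0.
have [s [e [e0 He]]] := lebesgue (cl i) d X (fun p => [set y | d0 p y < eta / 2]) id (compact_cl i) dm dt
  (fun p => ball_open d0 p (eta / 2) Hd0 Ht0) hG.
have key : forall x y, cl i x -> cl i y -> eta <= d0 x y -> e <= d x y.
  move=> x y hx hy hxy; rewrite leNgt; apply/negP => hlt.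
  have [p [_ _ Hp]] := He x hx.
  have px := Hp x hx; have py := Hp y hy hlt.
  have : d x x < e by have [_ [_ h] _ _] := dm x x x hx hx hx; rewrite h.
  move=> /px /= px'; move: py => /= py'.
  have := d0_tri x p y; rewrite d0_sym in px'; lra.
have c0 : 0 < c by apply: lt_trans c1.
exists (ln (e / c) / ln a) => x y hx hy hxy.
apply: ap_upper => //; first by rewrite divr_gt0.
have [_ h2] := hb x y hx hy.
have := key x y hx hy hxy.
rewrite ler_pdivrMr //; move=> h3; rewrite mulrC; apply: le_trans h3 h2.
Qed.

Definition pick (A : set X) : option X :=
  match pselect (exists p, A p) with
  | left h => Some (projT1 (cid h))
  | right _ => None
  end.

Lemma pickP A : match pick A with Some p => A p | None => forall p, ~ A p end.
Proof.
rewrite /pick; case: pselect => [h|h]; first exact: (projT2 (cid h)).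
by move=> p Ap; apply: h; exists p.
Qed.

Variables (s : seq X) (eps : R).
Hypothesis eps0 : 0 < eps.
Hypothesis Hleb : forall x, exists p, p \in s /\ forall y, d0 x y < eps -> U (g p) y.

Definition Sxy x y := [set p | p \in s /\ cl (g p) x /\ cl (g p) y].

Definition L x y := match pick (Sxy x y) with Some p => l (g p) x y | None => 0%E end.

Lemma L_cases x y :
  (exists p, [/\ p \in s, cl (g p) x, cl (g p) y & L x y = l (g p) x y]) \/
  (L x y = 0%E /\ forall p, p \in s -> cl (g p) x -> cl (g p) y -> False).
Proof.
rewrite /L; have := pickP (Sxy x y); case: pick => [p [ps [hx hy]]|h].
  by left; exists p.
by right; split => // p ps hx hy; apply: (h p).
Qed.

Lemma Sxy_sym x y : Sxy x y = Sxy y x.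
Proof. by apply/seteqP; split => p [ps [hx hy]]. Qed.

Lemma L_sym x y : L x y = L y x.
Proof.
rewrite /L Sxy_sym; have := pickP (Sxy y x); case: pick => // p [_ [hy hx]].
exact: l_sym (g p) x y hx hy.
Qed.

Lemma L_ge0 x y : (0 <= L x y)%E.
Proof.
have [[p [ps hx hy ->]]|[-> _]] := L_cases x y => //.
exact: (ltW (l_pos (g p) x y hx hy)).
Qed.

Lemma L_ninf x y : L x y <> -oo%E.
Proof. by have := L_ge0 x y; case: (L x y). Qed.

Lemma L_near x y : d0 x y < eps -> exists p, [/\ p \in s, cl (g p) x & cl (g p) y].
Proof.
move=> hxy; have [p [ps hp]] := Hleb x.
exists p; split => //; apply: subset_closure; apply: hp => //.
by rewrite d0_xx.
Qed.

Lemma L_bound eta : 0 < eta -> exists B : R, 0 <= B /\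
  forall x y, eta <= d0 x y -> (L x y <= B%:E)%E.
Proof.
move=> eta0.
pose P := fun p (B : R) => forall x y, cl (g p) x -> cl (g p) y ->
  eta <= d0 x y -> (l (g p) x y <= B%:E)%E.
have mono : forall p C C', P p C -> C <= C' -> P p C'.
  by move=> p C C' h CC' x y hx hy hxy; apply: le_trans (h x y hx hy hxy) _; rewrite lee_fin.
have [B [B0 HB]] := seq_bound X P s (fun p _ => F2 (g p) eta eta0) mono.
exists B; split => // x y hxy.
have [[p [ps hx hy ->]]|[-> _]] := L_cases x y; last by rewrite lee_fin.
exact: HB.
Qed.

Lemma L_lip i : exists C : R, 0 <= C /\ forall x y, cl i x -> cl i y ->
  (L x y <= l i x y + C%:E)%E /\ (l i x y <= L x y + C%:E)%E.
Proof.
pose P := fun p (C : R) => forall x y, (cl (g p) `&` cl i) x -> (cl (g p) `&` cl i) y ->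
  (l (g p) x y <= l i x y + C%:E)%E /\ (l i x y <= l (g p) x y + C%:E)%E.
have mono : forall p C C', P p C -> C <= C' -> P p C'.
  move=> p C C' h CC' x y hx hy; have [h1 h2] := h x y hx hy.
  by split; apply: e_mono CC'.
have [Cs [Cs0 HCs]] := seq_bound X P s (fun p _ => Hlip (g p) i) mono.
have [Bi HBi] := F2 i eps eps0.
exists (Num.max Cs (Num.max Bi 0)); split; first by rewrite !le_max lexx !orbT.
move=> x y hx hy.
have [[p [ps hpx hpy ->]]|[-> hno]] := L_cases x y.
  have [h1 h2] := HCs p ps x y (conj hpx hx) (conj hpy hy).
  by split; apply: e_mono; [exact: h1| |exact: h2|]; rewrite le_max lexx.
have far : eps <= d0 x y.
  rewrite leNgt; apply/negP => /L_near [p [ps h1 h2]]; exact: hno p ps h1 h2.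
have := HBi x y hx hy far; have := l_pos i x y hx hy.
have M0 : 0 <= Num.max Cs (Num.max Bi 0) by rewrite !le_max lexx !orbT.
have MB : Bi <= Num.max Cs (Num.max Bi 0) by rewrite !le_max lexx !orbT.
move: M0 MB; set M := Num.max _ _.
case: (l i x y) => [r||] //= M0 MB; rewrite ?lee_fin ?lte_fin ?leey ?leNye ?add0r //; lra.
Qed.

Lemma L_inf x y : L x y = +oo%E <-> x = y.
Proof.
split.
  have [[p [ps hx hy ->]]|[-> _]] := L_cases x y => //.
  by move/(l_inf (g p) x y hx hy).
move=> <-; have [[p [ps hx hy ->]]|[_ hno]] := L_cases x x.
  by apply/(l_inf (g p) x x hx hy).
have [p [ps h1 h2]] : exists p, [/\ p \in s, cl (g p) x & cl (g p) x].
  by apply: L_near; rewrite d0_xx.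
by exfalso; exact: hno p ps h1 h2.
Qed.

Lemma L_quasi : exists delta : R, 0 < delta /\ forall x y z,
  (Order.min (L x y) (L y z) - delta%:E <= L x z)%E.
Proof.
pose P1 := fun p (C : R) => forall x y, cl (g p) x -> cl (g p) y ->
  (L x y <= l (g p) x y + C%:E)%E /\ (l (g p) x y <= L x y + C%:E)%E.
have mono1 : forall p C C', P1 p C -> C <= C' -> P1 p C'.
  move=> p C C' h CC' x y hx hy; have [h1 h2] := h x y hx hy.
  by split; apply: e_mono CC'.
have ex1 : forall p, p \in s -> exists C, P1 p C.
  by move=> p _; have [C [_ HC]] := L_lip (g p); exists C.
have [Cs [Cs0 HCs]] := seq_bound X P1 s ex1 mono1.
pose P2 := fun p (dl : R) => forall x y z, cl (g p) x -> cl (g p) y -> cl (g p) z ->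
  (Order.min (l (g p) x y) (l (g p) y z) - dl%:E <= l (g p) x z)%E.
have mono2 : forall p C C', P2 p C -> C <= C' -> P2 p C'.
  by move=> p C C' h CC' x y z hx hy hz; apply: e_sub_mono (h x y z hx hy hz) CC'.
have ex2 : forall p, p \in s -> exists C, P2 p C.
  by move=> p _; have [C [_ HC]] := l_quasi (g p); exists C.
have [Ds [Ds0 HDs]] := seq_bound X P2 s ex2 mono2.
have [Bs [Bs0 HBs]] := L_bound eps eps0.
exists (Bs + 2 * Cs + Ds + 1); split; first lra.
move=> x y z.
case: (boolP ((d0 y x < eps) && (d0 y z < eps))) => [/andP[h1 h2]|hn].
  have [p [ps hp]] := Hleb y.
  have cx : cl (g p) x by apply: subset_closure; apply: hp.
  have cz : cl (g p) z by apply: subset_closure; apply: hp.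
  have cy : cl (g p) y by apply: subset_closure; apply: hp; rewrite d0_xx.
  have [a1 _] := HCs p ps x y cx cy.
  have [b1 _] := HCs p ps y z cy cz.
  have [_ c2] := HCs p ps x z cx cz.
  have m := e_min a1 b1.
  have q := HDs p ps x y z cx cy cz.
  apply: (e_fin3 m q c2); lra.
move: hn; rewrite negb_and -!leNgt => /orP[h|h].
  have := HBs y x h; rewrite L_sym => hb.
  apply: (e_small (B := Bs)); [|lra|exact: L_ge0].
  by apply: le_trans hb; rewrite ge_min lexx.
have hb := HBs y z h.
apply: (e_small (B := Bs)); [|lra|exact: L_ge0].
by apply: le_trans hb; rewrite ge_min lexx orbT.
Qed.

Lemma D_top (a : R) (D : X -> X -> R) : 0 < a < 1 ->
  (forall x y, D x y <= alpha_pow a (L x y)) ->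
  (forall x y, alpha_pow a (L x y) <= 2 * D x y) ->
  metric_induces_topology setT D.
Proof.
move=> /[dup] ha /andP[a0 a1] hD1 hD2 x _ V; split.
  move=> [e e0 He].
  set j := g x.
  have cxj : cl j x by apply: subset_closure; apply: Hg.
  have [Cj [Cj0 HCj]] := L_lip j.
  have [[_ _ _ _ [dj [aj [cj [djm djt ajc cj1 hbj]]]]] _] := Hl j.
  have cj0 : 0 < cj by apply: lt_trans cj1.
  have /andP[aj0 aj1] := ajc.
  have lnaj : ln aj < 0 by apply: ln_lt0; rewrite aj0 aj1.
  set M := ln e / ln a.
  set t := expR ((M + Cj) * ln aj).
  have t0 : 0 < t by apply: expR_gt0.
  have [W [oW Wx WV]] : exists W : set X, [/\ open W, W x &
      forall y, cl j y -> W y -> [set y | dj x y < t / cj] y].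
    by apply/(djt x cxj); exists (t / cj); [rewrite divr_gt0|move=> y].
  exists (W `&` U j); split; [exact: openI|by split => //; apply: Hg|].
  move=> y _ [Wy Uy].
  have cyj : cl j y by apply: subset_closure.
  have hdj := WV y cyj Wy; rewrite /= in hdj.
  have [h1 _] := hbj x y cxj cyj.
  have hap : alpha_pow aj (l j x y) < t.
    have := le_lt_trans h1 hdj.
    by rewrite mulrC ltr_pM2r ?invr_gt0.
  have := ap_lower aj t (l j x y) ajc t0 (l_ninf j x y cxj cyj) hap.
  rewrite /t expRK mulfK ?lt_eqF // => hl.
  have [_ h2] := HCj x y cxj cyj.
  have hL := e_gt hl h2.
  apply: He => //; apply: le_lt_trans (hD1 x y) _.
  have := ap_small a M (L x y) ha hL; rewrite /M divfK ?lt_eqF ?ln_lt0 ?a0 ?a1 // lnK ?posrE //.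
move=> [W [oW Wx WV]].
have [e0 e00 He0] : exists2 e : R, 0 < e & forall y, setT y -> d0 x y < e -> W y.
  by apply/(Ht0 x Logic.I); exists W; split => // y _.
have [B [B0 HB]] := L_bound e0 e00.
have lna : ln a < 0 by apply: ln_lt0; rewrite a0 a1.
exists (expR (B * ln a) / 2); first by rewrite divr_gt0 ?expR_gt0.
move=> y _ hy.
apply: WV => //; apply: He0 => //.
rewrite ltNge; apply/negP => /HB hb.
have hr : alpha_pow a (L x y) < expR (B * ln a).
  by apply: le_lt_trans (hD2 x y) _; lra.
have := ap_lower a (expR (B * ln a)) (L x y) ha (expR_gt0 _) (L_ninf x y) hr.
rewrite expRK mulfK ?lt_eqF // => hlt.
by have := lt_le_trans hlt hb; rewrite ltxx.
Qed.

Lemma L_metric : exists (d : X -> X -> R) (alpha c : R),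
  [/\ is_metric_on setT d, metric_induces_topology setT d,
       0 < alpha < 1, 1 < c
     & forall x y, setT x -> setT y ->
         c^-1 * alpha_pow alpha (L x y) <= d x y /\
         d x y <= c * alpha_pow alpha (L x y)].
Proof.
have [dl [dl0 Hq]] := L_quasi.
have ln2 : 0 < ln (2 : R) by apply: ln_gt0; lra.
set k := ln 2 / (2 * dl).
have k0 : 0 < k by rewrite /k divr_gt0 // mulr_gt0.
set a := expR (- k).
have a0 : 0 < a by apply: expR_gt0.
have a1 : a < 1 by rewrite /a -expR0 ltr_expR; lra.
have ha : 0 < a < 1 by rewrite a0 a1.
set K := expR (dl * k).
have dlk : dl * k = ln 2 / 2 by rewrite /k; field; rewrite lt0r_neq0.
have K1 : 1 <= K by rewrite /K -expR0 ler_expR dlk; lra.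
have K2 : K * K <= 2.
  rewrite /K -expRD dlk.
  have -> : ln (2 : R) / 2 + ln 2 / 2 = ln 2 by field.
  by rewrite lnK ?posrE.
have K0 : 0 <= K by lra.
pose rho := fun x y => alpha_pow a (L x y).
have r0 : forall x y, 0 <= rho x y by move=> x y; apply: ap_ge0.
have rxx : forall x, rho x x = 0.
  by move=> x; rewrite /rho (proj2 (L_inf x x) erefl).
have rsym : forall x y, rho x y = rho y x by move=> x y; rewrite /rho L_sym.
have rq : forall x y z, rho x z <= K * Num.max (rho x y) (rho y z).
  move=> x y z.
  have hmin : Order.min (L x y) (L y z) <> -oo%E.
    by rewrite /Order.min; case: ifP => _; apply: L_ninf.
  have h := ap_shift k dl (Order.min (L x y) (L y z)) (L x z) k0 hmin (Hq x y z).
  apply: le_trans h _; apply: (ler_wpM2l K0).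
  by rewrite /Order.min; case: ifP => _; rewrite le_max lexx ?orbT.
have [Dge0 Dler rleD Dsym Dtri] := Dm_props rho K r0 rxx rsym rq K1 K2.
exists (Dm rho), a, 2; split => //.
- move=> x y z _ _ _; split => //.
  split => [h|<-].
    have := rleD x y; rewrite h mulr0 => hr.
    apply/L_inf; move: hr; rewrite /rho.
    case E: (L x y) => [r||] //.
      by rewrite ap_fin // => hr; have := expR_gt0 (r * ln a); rewrite ltNge hr.
    by have := L_ninf x y; rewrite E.
  by apply/eqP; rewrite eq_le Dge0 andbT; apply: le_trans (Dler x x) _; rewrite rxx.
- exact: D_top a (Dm rho) ha Dler rleD.
- by lra.
- move=> x y _ _; have := rleD x y; have := Dler x y; have := r0 x y.
  rewrite /rho => h1 h2 h3; split; lra.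
Qed.

End Main.

Theorem theorem1p1p8 (R : realType) (X : topologicalType) (I : Type)
  (U : I -> set X) (l : I -> X -> X -> \bar R) :
  compact [set: X] -> @metrizable_space R X ->
  (forall i, open (U i)) -> (forall x : X, exists i, U i x) ->
  (forall i, positive_log_scale_on (closure (U i)) (l i)) ->
  (forall i j, lipschitz_equiv_on (closure (U i) `&` closure (U j)) (l i) (l j)) ->
  exists L : X -> X -> \bar R,
    log_scale_on [set: X] L /\
    forall i, lipschitz_equiv_on (closure (U i)) L (l i).
Proof.
move=> Hc [d0 [Hd0 Ht0]] HU Hcov Hl Hlip.
have [g Hg] := choice Hcov.
have [s [eps [eps0 Heb]]] := lebesgue setT d0 I U g Hc Hd0 Ht0 HU (fun x _ => Hg x).
have Hleb : forall x, exists p, p \in s /\ forall y, (d0 x y < eps)%R -> U (g p) y.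
  move=> x; have [p [ps _ hp]] := Heb x Logic.I.
  by exists p; split => // y; apply: hp.
exists (L U l g s); split.
  split.
  - by move=> x y _ _; apply: L_sym.
  - by move=> x y _ _; apply: L_ninf.
  - by move=> x y _ _; apply: (L_inf U l d0 g Hd0 Hl s eps eps0 Hleb).
  - have [dl [dl0 Hq]] := L_quasi U l d0 g Hc Hd0 Ht0 Hl Hlip s eps eps0 Hleb.
    exists dl; first exact: (Order.POrderTheory.ltW dl0).
    by move=> x y z _ _ _; apply: Hq.
  - exact: (L_metric U l d0 g Hc Hd0 Ht0 HU Hg Hl Hlip s eps eps0 Hleb).
move=> i.
have [C [_ HC]] := L_lip U l d0 g Hc Hd0 Ht0 Hl Hlip s eps eps0 Hleb i.
by exists C.
Qed.
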